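(* For any group $A$, the assignment $q\mapsto\mathrm{Ker}(q)$ induces a bijection $$\bigsqcup_{B<A}\mathsf{Desc}^1(\mathsf T^l_{\imath_B},(B,m_B))\;\cong\;\mathsf{Fac}(A),$$ where $B$ ranges over proper subgroups of $A$ and $\imath_B:B\hookrightarrow A$ is the inclusion.
   Context: For a subgroup $B$ of $A$ with inclusion $\imath_B$, $\mathcal Z^1(\mathsf T^l_{\imath_B},(B,m_B))$ is identified with the set of maps $q:A\to B$ satisfying (ZL1) $q(1_A)=1_A$; (ZL2) $q(ba)=b\,q(a)$ for all $a\in A,b\in B$; (ZL3) $q(aa')=q(a\,q(a'))$ for all $a,a'\in A$ (exactly the algebra structures on the left $B$-set $B$ for the monad $A\otimes_B-$). $\mathsf{Desc}^1(\mathsf T^l_{\imath_B},(B,m_B))$ is its quotient by the relation $q\sim q'$ iff there is $b_0\in B$ with $q(a)b_0=q'(ab_0)$ for all $a\in A$ (isomorphism of the corresponding algebras). $\mathrm{Ker}(q)=\{a:q(a)=1_A\}$. $\mathsf{FAC}(A)$ is the set of pairs $(B,X)$ with $B$ a proper subgroup of $A$, $X$ a subgroup of $A$, $B\cap X=\{1_A\}$, $BX=A$; $\mathsf{Fac}(A)$ is its quotient by the equivalence $(B,X)\cong(B',X')$ iff $B=B'$ and $X,X'$ are conjugate in $A$. *)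

(* Defs.v *)
Set Implicit Arguments.

Record group := Group {
  gcar :> Type;
  gmul : gcar -> gcar -> gcar;
  gone : gcar;
  ginv : gcar -> gcar;
  gmulA : forall x y z, gmul x (gmul y z) = gmul (gmul x y) z;
  gmul1 : forall x, gmul gone x = x;
  gmulV : forall x, gmul (ginv x) x = gone
}.

Section Defs.
Variable A : group.
Local Notation "x * y" := (gmul A x y).
Local Notation "1" := (gone A).

Definition same_set (S T : A -> Prop) : Prop := forall x, S x <-> T x.

Definition subgroup (S : A -> Prop) : Prop :=
  S 1 /\ (forall x y, S x -> S y -> S (x * y)) /\ (forall x, S x -> S (ginv A x)).

Definition proper_subgroup (S : A -> Prop) : Prop :=
  subgroup S /\ exists a, ~ S a.

(* Z^1(T^l_{i_B}, (B, m_B)) : maps q : A -> B satisfying (ZL1)-(ZL3). *)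
Definition ZL (B : A -> Prop) (q : A -> A) : Prop :=
  (forall a, B (q a)) /\
  q 1 = 1 /\
  (forall a b, B b -> q (b * a) = b * q a) /\
  (forall a a', q (a * a') = q (a * q a')).

Definition desc_rel (B : A -> Prop) (q q' : A -> A) : Prop :=
  exists b0, B b0 /\ forall a, q a * b0 = q' (a * b0).

Definition Ker (q : A -> A) : A -> Prop := fun a => q a = 1.

Definition FAC (B X : A -> Prop) : Prop :=
  proper_subgroup B /\ subgroup X /\
  (forall a, B a -> X a -> a = 1) /\
  (forall a, exists b x, B b /\ X x /\ a = b * x).

Definition conjugate (X X' : A -> Prop) : Prop :=
  exists g, forall x, X' x <-> X (ginv A g * x * g).

(* the equivalence defining Fac(A) = FAC(A)/~ *)
Definition fac_equiv (B X B' X' : A -> Prop) : Prop :=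
  same_set B B' /\ conjugate X X'.

(* elements of the disjoint union over proper subgroups B of Z^1(T^l_{i_B},(B,m_B)) *)
Record DescElt := MkDescElt {
  dB : A -> Prop;
  dq : A -> A;
  dB_proper : proper_subgroup dB;
  dq_ZL : ZL dB dq
}.

(* the equivalence whose quotient is the disjoint union of the Desc^1 sets:
   same index B, and q ~ q' in Desc^1 *)
Definition desc_equiv (d d' : DescElt) : Prop :=
  same_set (dB d) (dB d') /\ desc_rel (dB d) (dq d) (dq d').

(* "q |-> Ker q" (i.e. (B,[q]) |-> [(B, Ker q)]) induces a well-defined
   bijection  (disjoint union of Desc^1) -> Fac(A):
   it lands in FAC, respects the equivalences, reflects them (injective),
   and hits every class (surjective). *)
Definition ker_induces_bijection : Prop :=
  (forall d : DescElt, FAC (dB d) (Ker (dq d))) /\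
  (forall d d' : DescElt, desc_equiv d d' ->
      fac_equiv (dB d) (Ker (dq d)) (dB d') (Ker (dq d'))) /\
  (forall d d' : DescElt,
      fac_equiv (dB d) (Ker (dq d)) (dB d') (Ker (dq d')) -> desc_equiv d d') /\
  (forall B X, FAC B X ->
      exists d : DescElt, fac_equiv (dB d) (Ker (dq d)) B X).

End Defs.

(* Main.v *)
Require Import Defs.
From Stdlib Require Import ClassicalEpsilon.

Section S.
Variable A : group.
Local Notation "x * y" := (gmul A x y).
Local Notation "1" := (gone A).
Local Notation inv := (ginv A).

Lemma mulA_r x y z : (x * y) * z = x * (y * z).
Proof. symmetry; apply gmulA. Qed.

Lemma mulVK x y : inv x * (x * y) = y.
Proof. rewrite gmulA, gmulV, gmul1. reflexivity. Qed.

Lemma cancel_l x y z : x * y = x * z -> y = z.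
Proof. intro H. rewrite <- (mulVK x y), <- (mulVK x z), H. reflexivity. Qed.

Lemma mulV1 x : x * inv x = 1.
Proof.
  set (e := x * inv x).
  assert (He : e * e = e).
  { unfold e. rewrite mulA_r, mulVK. reflexivity. }
  transitivity (inv e * (e * e)).
  - rewrite gmulA, gmulV, gmul1. reflexivity.
  - rewrite He, gmulV. reflexivity.
Qed.

Lemma mul1r x : x * 1 = x.
Proof. rewrite <- (gmulV A x), gmulA, mulV1, gmul1. reflexivity. Qed.

Lemma mulKV x y : x * (inv x * y) = y.
Proof. rewrite gmulA, mulV1, gmul1. reflexivity. Qed.

Lemma invK x : inv (inv x) = x.
Proof. apply (cancel_l (inv x)). rewrite mulV1, gmulV. reflexivity. Qed.

Lemma inv_mul x y : inv (x * y) = inv y * inv x.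
Proof.
  apply (cancel_l (x * y)). rewrite mulV1, mulA_r, mulKV, mulV1. reflexivity.
Qed.

Lemma inv1 : inv 1 = 1.
Proof. rewrite <- (mul1r (inv 1)). apply gmulV. Qed.

Lemma swap1 x y : x * y = 1 -> y * x = 1.
Proof.
  intro H. assert (E : x = inv y).
  { transitivity (x * y * inv y); [rewrite mulA_r, mulV1, mul1r; reflexivity|].
    rewrite H, gmul1. reflexivity. }
  rewrite E. apply mulV1.
Qed.

Hint Rewrite mulA_r mulVK mulKV mulV1 gmulV gmul1 mul1r invK inv_mul inv1 : grp.

Ltac gs := autorewrite with grp in *.

Lemma sub_l (S : A -> Prop) x y : subgroup A S -> S x -> S (x * y) -> S y.
Proof.
  intros [H1 [Hm Hi]] Hx Hxy. rewrite <- (mulVK x y). apply Hm; auto.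
Qed.

Lemma uniq_dec (B X : A -> Prop) b x b' x' :
  subgroup A B -> subgroup A X -> (forall a, B a -> X a -> a = 1) ->
  B b -> X x -> B b' -> X x' -> b * x = b' * x' -> b = b'.
Proof.
  intros HB HX Hint Hb Hx Hb' Hx' E.
  assert (E2 : inv b' * b = x' * inv x).
  { transitivity (inv b' * (b * x * inv x)); [gs; reflexivity|].
    rewrite E. gs. reflexivity. }
  assert (H1 : inv b' * b = 1).
  { apply Hint.
    - destruct HB as [? [Hm Hi]]. apply Hm; auto.
    - rewrite E2. destruct HX as [? [Hm Hi]]. apply Hm; auto. }
  rewrite <- (mulKV b' b), H1, mul1r. reflexivity.
Qed.

Lemma part1 (B : A -> Prop) q : proper_subgroup A B -> ZL A B q -> FAC A B (Ker A q).
Proof.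
  intros HP [Hq1 [Hq2 [Hq3 Hq4]]].
  assert (HqB : forall b, B b -> q b = b).
  { intros b Hb. rewrite <- (mul1r b) at 1. rewrite Hq3 by auto. rewrite Hq2, mul1r. reflexivity. }
  split; [exact HP|]. split; [|split].
  - unfold Ker. split; [exact Hq2|]. split.
    + intros x y Hx Hy. rewrite Hq4, Hy, mul1r. exact Hx.
    + intros x Hx. transitivity (q (inv x * q x)); [rewrite Hx, mul1r; reflexivity|].
      rewrite <- Hq4, gmulV. exact Hq2.
  - intros a Ha Hk. unfold Ker in Hk. rewrite HqB in Hk; auto.
  - intros a. exists (q a), (inv (q a) * a). split; [auto|]. split.
    + unfold Ker. destruct HP as [[_ [_ Hi]] _]. rewrite Hq3 by auto. gs. reflexivity.
    + gs. reflexivity.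
Qed.

Lemma main : ker_induces_bijection A.
Proof.
  split; [|split; [|split]].
  - intros [B q HP HZ]. simpl. apply part1; auto.
  - intros [B q HP HZ] [B' q' HP' HZ'] [HBB [b0 [Hb0 E]]]. simpl in *.
    split; [exact HBB|].
    exists (inv b0). intros x. unfold Ker. gs.
    destruct HZ as [Hq1 [Hq2 [Hq3 Hq4]]].
    assert (Ex : q' x = q (x * inv b0) * b0).
    { rewrite E. gs. reflexivity. }
    rewrite Ex. destruct HP as [[_ [_ Hi]] _].
    rewrite (Hq3 _ b0) by auto. split; apply swap1.
  - intros [B q HP HZ] [B' q' HP' HZ'] [HBB [g Hg]]. simpl in *.
    split; [exact HBB|].
    pose proof (part1 _ _ HP HZ) as [_ [HX [_ Hdec]]].
    destruct (Hdec g) as [b [x0 [Hb [Hx0 Eg]]]].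
    pose proof HP as [[HB1 [HBm HBi]] _].
    pose proof HZ as [Hq1 [Hq2 [Hq3 Hq4]]].
    pose proof HZ' as [Hq1' [Hq2' [Hq3' Hq4']]].
    exists (inv b). simpl. split; [auto|]. intros a.
    set (y := inv (q a) * a).
    assert (Hy : q y = 1) by (unfold y; rewrite Hq3 by auto; gs; reflexivity).
    assert (Ea : a * inv b = (q a * inv b) * (b * y * inv b)) by (unfold y; gs; reflexivity).
    rewrite Ea, Hq3'.
    2:{ apply HBB. auto. }
    assert (Hk : q' (b * y * inv b) = 1).
    { apply (proj2 (Hg _)). unfold Ker in *. rewrite Eg.
      destruct HX as [_ [Xm Xi]]. gs.
      apply Xm; [apply Xi; exact Hx0|]. apply Xm; [exact Hy| exact Hx0]. }
    rewrite Hk, mul1r. reflexivity.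
  - intros B X [HP [HX [Hint Hdec]]].
    assert (HP' := HP). destruct HP' as [HB _].
    assert (Hd : forall a, exists b, B b /\ exists x, X x /\ a = b * x).
    { intro a. destruct (Hdec a) as [b [x [? [? ?]]]]. eauto. }
    set (q := fun a => proj1_sig (constructive_indefinite_description _ (Hd a))).
    assert (Hqs : forall a, B (q a) /\ exists x, X x /\ a = q a * x).
    { intro a. unfold q. destruct (constructive_indefinite_description _ (Hd a)) as [b Hb].
      exact Hb. }
    assert (Hqu : forall a b x, B b -> X x -> a = b * x -> q a = b).
    { intros a b x Hb Hx Ea. destruct (Hqs a) as [Hqa [x' [Hx' Ea']]].
      apply (uniq_dec B X (q a) x' b x HB HX Hint); auto. rewrite <- Ea', <- Ea. reflexivity. }
    destruct HB as [HB1 [HBm HBi]]. assert (HX' := HX). destruct HX' as [HX1 [HXm HXi]].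
    assert (HZ : ZL A B q).
    { split; [|split; [|split]].
      - intro a. apply Hqs.
      - apply (Hqu _ 1 1); auto. gs. reflexivity.
      - intros a b Hb. destruct (Hqs a) as [Hqa [x [Hx Ea]]].
        apply (Hqu _ _ x); auto. rewrite Ea at 1. gs. reflexivity.
      - intros a a'. destruct (Hqs a') as [Hqa [x [Hx Ea]]].
        destruct (Hqs (a * q a')) as [Hc [y [Hy Ec]]].
        apply (Hqu _ _ (y * x)); auto. transitivity ((a * q a') * x); [rewrite Ea at 1; gs; reflexivity|]. rewrite Ec at 1. gs. reflexivity. }
    exists (MkDescElt HP HZ). simpl. split; [intro; tauto|].
    exists 1. intros x. gs. unfold Ker. split; intro H.
    + apply (Hqu _ _ x); auto. gs. reflexivity.
    + destruct (Hqs x) as [Hqx [x' [Hx' Ex]]]. rewrite H in Ex. gs.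
      subst x. exact Hx'.
Qed.

End S.

Theorem theorem4p9 : forall A : group, ker_induces_bijection A.
Proof. exact main. Qed.
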